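(* For every integer $n\ge 1$, the vertices of \[\mathrm{Newt}(U_n)=\sum_{1\le i<j\le n}\mathrm{conv}\{e_i+e_{n+j},\,e_j+e_{n+i}\}\subseteq\mathbb{R}^{2n}\] are exactly the points $(\pi,\pi^c)-(1,\dots,1)$ for $\pi\in\mathfrak{S}_n$.
   Context: $e_1,\dots,e_{2n}$ are the standard basis vectors of $\mathbb{R}^{2n}$ and the sum is a Minkowski sum. A permutation $\pi=\pi_1\cdots\pi_n\in\mathfrak{S}_n$ is identified with the vector $(\pi_1,\dots,\pi_n)\in\mathbb{R}^n$, and its complement is $\pi^c=(n+1-\pi_1,\dots,n+1-\pi_n)$; $(\pi,\pi^c)\in\mathbb{R}^{2n}$ is the concatenation and $(1,\dots,1)\in\mathbb{R}^{2n}$. *)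

(* Defs.v *)
From HB Require Import structures.
From mathcomp Require Import all_boot all_order all_algebra all_fingroup.
From mathcomp Require Import reals.
Set Implicit Arguments. Unset Strict Implicit. Unset Printing Implicit Defensive.
Import Order.TTheory GRing.Theory Num.Theory.
Local Open Scope ring_scope.

Definition dotv (R : realType) (m : nat) (c x : 'rV[R]_m) : R :=
  \sum_(k < m) c 0 k * x 0 k.

Definition is_vertex (R : realType) (m : nat) (S : 'rV[R]_m -> Prop)
  (x : 'rV[R]_m) : Prop :=
  S x /\ exists c : 'rV[R]_m, forall y, S y -> y <> x -> dotv c y < dotv c x.

(* standard basis vectors e_i and e_{n+j} of R^{2n} (0-indexed) *)
Definition eL (R : realType) (n : nat) (i : 'I_n) : 'rV[R]_(n + n) :=
  delta_mx 0 (lshift n i).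
Definition eR (R : realType) (n : nat) (j : 'I_n) : 'rV[R]_(n + n) :=
  delta_mx 0 (rshift n j).

Definition NewtU (R : realType) (n : nat) : 'rV[R]_(n + n) -> Prop :=
  fun x => exists t : 'I_n -> 'I_n -> R,
    (forall i j : 'I_n, (i < j)%N -> 0 <= t i j <= 1) /\
    x = \sum_(i < n) \sum_(j < n | (i < j)%N)
          (t i j *: (eL R i + eR R j) + (1 - t i j) *: (eL R j + eR R i)).

(* (pi, pi^c) - (1,...,1), where pi_i = (val (pi i)).+1 and
   pi^c_i = n + 1 - pi_i *)
Definition perm_point (R : realType) (n : nat) (p : 'S_n) : 'rV[R]_(n + n) :=
  row_mx (\row_(i < n) ((val (p i)).+1)%:R)
         (\row_(i < n) (n.+1 - (val (p i)).+1)%:R)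
  - const_mx 1.

(* Main.v *)
Require Import Defs.
From HB Require Import structures.
From mathcomp Require Import all_boot all_order all_algebra all_fingroup.
From mathcomp Require Import reals.
From mathcomp Require Import ring lra.
Import Order.TTheory GRing.Theory Num.Theory.
Local Open Scope ring_scope.
Set Implicit Arguments. Unset Strict Implicit.

Definition Ssum (R : realType) (n : nat) (t : 'I_n -> 'I_n -> R) : 'rV[R]_(n + n) :=
  \sum_(i < n) \sum_(j < n | (i < j)%N)
          (t i j *: (eL R i + eR R j) + (1 - t i j) *: (eL R j + eR R i)).

Definition gfun (R : realType) (n : nat) (c : 'rV[R]_(n + n)) (t : 'I_n -> 'I_n -> R) (i j : 'I_n) : R :=
  t i j * (c 0 (lshift n i) + c 0 (rshift n j)) + (1 - t i j) * (c 0 (lshift n j) + c 0 (rshift n i)).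

Lemma dotvD (R : realType) (m : nat) (c u v : 'rV[R]_m) : dotv c (u + v) = dotv c u + dotv c v.
Proof. by rewrite /dotv -big_split; apply: eq_bigr => k _; rewrite mxE mulrDr. Qed.

Lemma dotv0 (R : realType) (m : nat) (c : 'rV[R]_m) : dotv c 0 = 0.
Proof. by rewrite /dotv big1 // => k _; rewrite mxE mulr0. Qed.

Lemma dotvZ (R : realType) (m : nat) (c u : 'rV[R]_m) a : dotv c (a *: u) = a * dotv c u.
Proof. by rewrite /dotv mulr_sumr; apply: eq_bigr => k _; rewrite mxE mulrCA. Qed.

Lemma dotv_delta (R : realType) (m : nat) (c : 'rV[R]_m) k : dotv c (delta_mx 0 k) = c 0 k.
Proof.
rewrite /dotv (bigD1 k) //= big1 ?addr0 => [|l hl]; rewrite mxE.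
  by rewrite !eqxx mulr1.
by case: eqP hl => // _ _; rewrite andbF mulr0.
Qed.

Lemma dotv_sum (R : realType) (m : nat) (c : 'rV[R]_m) (I : Type) (r : seq I) (P : pred I) F :
  dotv c (\sum_(i <- r | P i) F i) = \sum_(i <- r | P i) dotv c (F i).
Proof. by apply: big_morph; [exact: dotvD | exact: dotv0]. Qed.

Lemma dot_S (R : realType) (n : nat) (c : 'rV[R]_(n + n)) t :
  dotv c (Ssum t) = \sum_(i < n) \sum_(j < n | (i < j)%N) gfun c t i j.
Proof.
rewrite /Ssum dotv_sum; apply: eq_bigr => i _; rewrite dotv_sum; apply: eq_bigr => j _.
by rewrite /gfun !dotvD !dotvZ !dotvD /eL /eR !dotv_delta.
Qed.
Lemma count_lt (R : realType) (n v : nat) : (v <= n)%N ->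
  \sum_(j < n) (if (j < v)%N then 1 else 0 : R) = v%:R.
Proof.
move=> hv.
rewrite -(big_mkord xpredT (fun j => if (j < v)%N then 1 else 0 : R)).
rewrite (@big_cat_nat _ _ _ v 0 n _ _ (leq0n v) hv) /=.
rewrite (@eq_big_nat _ _ _ 0 v _ (fun=> 1)); last by move=> j /andP[_ ->].
rewrite (@eq_big_nat _ _ _ v n _ (fun=> 0)); last by move=> j /andP[hj _]; rewrite ltnNge hj.
by rewrite !sumr_const_nat mul0rn addr0 subn0.
Qed.

Lemma count_gt (R : realType) (n v : nat) : (v < n)%N ->
  \sum_(j < n) (if (v < j)%N then 1 else 0 : R) = (n - v.+1)%:R.
Proof.
move=> hv.
rewrite -(big_mkord xpredT (fun j => if (v < j)%N then 1 else 0 : R)).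
rewrite (@big_cat_nat _ _ _ v.+1 0 n _ _ (leq0n v.+1) hv) /=.
rewrite (@eq_big_nat _ _ _ 0 v.+1 _ (fun=> 0)); last by move=> j /andP[_ hj]; rewrite ltnNge -ltnS hj.
rewrite (@eq_big_nat _ _ _ v.+1 n _ (fun=> 1)); last by move=> j /andP[hj _]; rewrite hj.
by rewrite !sumr_const_nat mul0rn add0r.
Qed.

Lemma sum_perm (R : realType) (n : nat) (p : 'S_n) (F : 'I_n -> R) :
  \sum_j F (p j) = \sum_j F j.
Proof. by symmetry; exact: (reindex_inj (@perm_inj _ p)). Qed.

Lemma sym_sum (R : realType) (n : nat) (h : 'I_n -> 'I_n -> R) : (forall i, h i i = 0) ->
  \sum_(i < n) \sum_(j < n | (i < j)%N) (h i j + h j i) = \sum_(i < n) \sum_(j < n) h i j.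
Proof.
move=> h0.
have E : \sum_(i < n) \sum_(j < n | (i < j)%N) h j i = \sum_(i < n) \sum_(j < n | (j < i)%N) h i j.
  rewrite (exchange_big_dep xpredT) //=.
rewrite (eq_bigr (fun i : 'I_n => \sum_(j < n | (i < j)%N) h i j + \sum_(j < n | (i < j)%N) h j i)); last by move=> i _; rewrite big_split.
rewrite big_split /= E -big_split; apply: eq_bigr => i _ /=.
rewrite [RHS](bigID (fun j : 'I_n => (i < j)%N)) /=; congr (_ + _).
rewrite [RHS](bigID (fun j : 'I_n => (j < i)%N)) /=.
have Z : \sum_(j < n | ~~ (i < j)%N && ~~ (j < i)%N) h i j = 0.
  apply: big1 => j /andP[a b]; have -> : j = i; last exact: h0.
  by move: a b; rewrite -!leqNgt => a b; apply/val_inj/anti_leq; rewrite a b.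
rewrite Z addr0; apply: eq_bigl => j; rewrite andb_idl //; move=> /ltnW; by rewrite leqNgt.
Qed.

Definition tperm (R : realType) (n : nat) (p : 'S_n) (i j : 'I_n) : R :=
  if (p j < p i)%N then 1 else 0.

Lemma tperm_sym (R : realType) (n : nat) (p : 'S_n) (i j : 'I_n) : (i < j)%N ->
  1 - tperm R p i j = tperm R p j i.
Proof.
move=> hij; rewrite /tperm.
have : p i != p j by rewrite (inj_eq perm_inj) neq_ltn hij.
case: ltngtP => //= e.
- by rewrite subrr.
- by rewrite subr0.
- have e2 : p j = p i by apply: val_inj.
  by rewrite e2 eqxx.
Qed.

Lemma eL_l (R : realType) (n : nat) (i m : 'I_n) : eL R i 0 (lshift n m) = (i == m)%:R.
Proof. by rewrite /eL mxE eqxx eq_lshift eq_sym. Qed.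
Lemma eL_r (R : realType) (n : nat) (i m : 'I_n) : eL R i 0 (rshift n m) = 0.
Proof. by rewrite /eL mxE eqxx eq_rlshift. Qed.
Lemma eR_l (R : realType) (n : nat) (i m : 'I_n) : eR R i 0 (lshift n m) = 0.
Proof. by rewrite /eR mxE eqxx eq_lrshift. Qed.
Lemma eR_r (R : realType) (n : nat) (i m : 'I_n) : eR R i 0 (rshift n m) = (i == m)%:R.
Proof. by rewrite /eR mxE eqxx eq_rshift eq_sym. Qed.

Lemma key (R : realType) (n : nat) (p : 'S_n) : perm_point R p = Ssum (tperm R p).
Proof.
apply/rowP => k.
set h := fun i j : 'I_n => tperm R p i j * (eL R i 0 k + eR R j 0 k).
have -> : Ssum (tperm R p) 0 k = \sum_(i < n) \sum_(j < n | (i < j)%N) (h i j + h j i).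
  rewrite /Ssum summxE; apply: eq_bigr => i _; rewrite summxE; apply: eq_big => // j hij.
  by rewrite /h /eL /eR !mxE tperm_sym.
rewrite sym_sum => [|i]; last by rewrite /h /tperm ltnn mul0r.
case: (split_ordP k) => m -> {k} in h *; rewrite /h /perm_point.
- rewrite mxE row_mxEl !mxE.
  rewrite (bigD1 m) //= [X in _ = _ + X]big1 => [|i him]; last first.
    by apply: big1 => j _; rewrite eL_l eR_l (negbTE him) addr0 mulr0.
  rewrite addr0.
  under eq_bigr => j _ do rewrite eL_l eR_l eqxx addr0 mulr1.
  rewrite /tperm (sum_perm p (fun j => if (j < p m)%N then 1 else 0)) count_lt; last exact: ltnW.
  by rewrite -addn1 natrD addrK.
- rewrite mxE row_mxEr !mxE.
  rewrite exchange_big (bigD1 m) //= [X in _ = _ + X]big1 => [|j hjm]; last first.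
    by apply: big1 => i _; rewrite eL_r eR_r (negbTE hjm) add0r mulr0.
  rewrite addr0.
  under eq_bigr => i _ do rewrite eL_r eR_r eqxx add0r mulr1.
  rewrite /tperm (sum_perm p (fun i => if (p m < i)%N then 1 else 0)) count_gt //.
  by rewrite subSS -(subnSK (ltn_ord (p m))) -addn1 natrD addrK.
Qed.

Definition belowr (R : realType) (n : nat) (a : 'I_n -> R) (l k : 'I_n) : bool :=
  (a l < a k) || ((a l == a k) && (l < k)%N).

Lemma rank_perm (R : realType) (n : nat) (a : 'I_n -> R) :
  exists p : 'S_n, forall i j : 'I_n, (i < j)%N -> (a j < a i) = (p j < p i)%N.
Proof.
have irr k : ~~ belowr a k k by rewrite /belowr ltxx eqxx ltnn.
have trans l k m : belowr a l k -> belowr a k m -> belowr a l m.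
  rewrite /belowr => /orP[h1|/andP[/eqP e1 h1]] /orP[h2|/andP[/eqP e2 h2]].
  - by rewrite (lt_trans h1 h2).
  - by rewrite -e2 h1.
  - by rewrite e1 h2.
  - by rewrite e1 e2 eqxx (ltn_trans h1 h2) orbT.
have tot l k : l != k -> belowr a l k || belowr a k l.
  move=> hlk; rewrite /belowr; case: (ltgtP (a l) (a k)) => //= _.
  by rewrite -neq_ltn.
pose rk k := #|[set l | belowr a l k]|.
have rk_lt k : (rk k < n)%N.
  have : [set l | belowr a l k] \proper [set: 'I_n].
    rewrite properT; apply/eqP => e.
    have : k \in [set l | belowr a l k] by rewrite e inE.
    by rewrite inE (negbTE (irr k)).
  by move/proper_card; rewrite cardsT card_ord.
have mono l k : belowr a l k -> (rk l < rk k)%N.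
  move=> h; apply: proper_card; apply/properP; split.
    by apply/subsetP => m; rewrite !inE => hm; exact: trans hm h.
  by exists l; rewrite inE ?h ?irr.
have f_inj : injective (fun k => Ordinal (rk_lt k)).
  move=> k l /(congr1 val) /= e; apply/eqP; apply: contraT => hkl.
  by case/orP: (tot _ _ hkl) => /mono; rewrite e ltnn.
exists (perm f_inj) => i j hij; rewrite !permE /=.
apply/idP/idP => h.
  by apply: mono; rewrite /belowr h.
apply: contraTT h => h; rewrite -leqNgt; apply: ltnW; apply: mono.
rewrite -leNgt le_eqVlt in h; rewrite /belowr.
by case/orP: h => ->; rewrite ?hij ?orbT.
Qed.

Definition aof (R : realType) (n : nat) (c : 'rV[R]_(n + n)) (k : 'I_n) : R :=
  c 0 (lshift n k) - c 0 (rshift n k).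

Lemma gfun_le (R : realType) (n : nat) (c : 'rV[R]_(n + n)) t to (i j : 'I_n) :
  0 <= t i j <= 1 -> to i j = (if aof c j < aof c i then 1 else 0) ->
  gfun c t i j <= gfun c to i j.
Proof.
rewrite /gfun /aof => /andP[h0 h1] ->; move: h0 h1; move: (t i j) => s.
case: ifP => h h0 h1; nra.
Qed.

Lemma gfun_lt (R : realType) (n : nat) (c : 'rV[R]_(n + n)) t to (i j : 'I_n) :
  0 <= t i j <= 1 -> to i j = (if aof c j < aof c i then 1 else 0) ->
  aof c i != aof c j -> t i j != to i j ->
  gfun c t i j < gfun c to i j.
Proof.
rewrite /gfun /aof => /andP[h0 h1] ->; move: h0 h1; move: (t i j) => s.
case: ifP => h h0 h1 hne hs.
  have : s < 1 by rewrite lt_neqAle hs h1.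
  nra.
have : 0 < s by rewrite lt_neqAle eq_sym hs h0.
have : c 0 (lshift n i) - c 0 (rshift n i) < c 0 (lshift n j) - c 0 (rshift n j).
  by rewrite lt_neqAle hne leNgt h.
nra.
Qed.

Lemma sum2_lt (R : realType) (n : nat) (F G : 'I_n -> 'I_n -> R) (i0 j0 : 'I_n) :
  (i0 < j0)%N -> (forall i j : 'I_n, (i < j)%N -> F i j <= G i j) -> F i0 j0 < G i0 j0 ->
  \sum_(i < n) \sum_(j < n | (i < j)%N) F i j < \sum_(i < n) \sum_(j < n | (i < j)%N) G i j.
Proof.
move=> hij hle hlt.
rewrite (bigD1 i0) //= [X in _ < X](bigD1 i0) //=; apply: ltr_leD.
  rewrite (bigD1 j0) //= [X in _ < X](bigD1 j0) //=; apply: ltr_leD => //.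
  by apply: ler_sum => j /andP[h _]; exact: hle.
by apply: ler_sum => i _; apply: ler_sum => j h; exact: hle.
Qed.

Unset Implicit Arguments.

Theorem mainTheorem4 (R : realType) (n : nat) (hn : (1 <= n)%N) :
  forall x : 'rV[R]_(n + n),
    is_vertex (@NewtU R n) x <-> exists p : 'S_n, x = @perm_point R n p.
Proof.
move=> x; split.
  move=> [[t [ht ex]] [c hc]].
  have ex' : x = Ssum t := ex.
  pose to := fun i j : 'I_n => if aof c j < aof c i then (1 : R) else 0.
  have memo : @NewtU R n (Ssum to).
    exists to; split => // i j _; rewrite /to; case: ifP => _; by rewrite ?lexx ?ler01.
  have Hle : dotv c x <= dotv c (Ssum to).
    rewrite ex' !dot_S; apply: ler_sum => i _; apply: ler_sum => j hij.
    by apply: gfun_le => //; exact: ht.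
  have Heq : Ssum to = x.
    case: (eqVneq (Ssum to) x) => // hne.
    have := hc _ memo (fun e => ltac:(by rewrite e eqxx in hne)).
    by rewrite ltNge Hle.
  have [p hp] := rank_perm (aof c).
  exists p; rewrite key -Heq; apply: eq_bigr => i _; apply: eq_bigr => j hij.
  by rewrite /to /tperm hp.
move=> [p ->]; rewrite key; split.
  exists (tperm R p); split => // i j _; rewrite /tperm; case: ifP => _; by rewrite ?lexx ?ler01.
pose c : 'rV[R]_(n + n) := row_mx (\row_k ((p k : nat)%:R)) 0.
have ac k : aof c k = (p k : nat)%:R by rewrite /aof /c row_mxEl row_mxEr !mxE subr0.
have tpE i j : tperm R p i j = if aof c j < aof c i then 1 else 0.
  by rewrite /tperm !ac ltr_nat.
exists c => y [t [ht ey]] hne.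
have ey' : y = Ssum t := ey.
rewrite ey' !dot_S.
case: (boolP [exists i : 'I_n, exists j : 'I_n, (i < j)%N && (t i j != tperm R p i j)]).
  move=> /existsP[i /existsP[j /andP[hij hne']]].
  apply: (sum2_lt hij) => [i' j' hij'|].
    by apply: gfun_le => //; exact: ht.
  apply: gfun_lt => //; first exact: ht.
  rewrite !ac eqr_nat; apply/eqP => e.
  by have eij := perm_inj (val_inj e); rewrite eij ltnn in hij.
move=> hno; exfalso; apply: hne; rewrite ey'.
apply: eq_bigr => i _; apply: eq_bigr => j hij.
move: hno => /existsPn /(_ i) /existsPn /(_ j); rewrite hij /= negbK => /eqP ->.
by [].
Qed.
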